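(* Let $\delta\le0.011$ and let $\mathcal{I}$ be a $\delta$-ONI instance with $n$ agents and $|N^1_1|\le n\left(\frac14-\delta\right)/\left(\frac14+\frac\delta3\right)$. Then every agent $i\in N^2$ receives a bag of value at least $\frac34+\delta$ at the end of Algorithm $\mathtt{approxMMS1}(\mathcal{I},\delta)$.
   Context: Instance: agents $[n]$, goods $[m]$, additive valuations; goods with index larger than $m$ are dummy goods of value 0. Ordered: $v_i(1)\ge\dots\ge v_i(m)$ for all $i$. Normalized: every agent $i$ has a partition of the goods into $n$ bundles each of value exactly 1 to $i$. $\alpha$-irreducible: for every $i$, $v_i(1)<\alpha$, $v_i(\{2n-1,2n,2n+1\})<\alpha$, $v_i(\{3n-2,\dots,3n+1\})<\alpha$, $v_i(\{1,2n+1\})<\alpha$. $\delta$-ONI: ordered, normalized, $(3/4+\delta)$-irreducible. $B_k=\{k,2n-k+1\}$ ($k\in[n]$); $N^1=\{i:v_i(B_k)\le1\ \forall k\}$; $N^2=[n]\setminus N^1$; $N^1_1=\{i\in N^1:v_i(2n+1)\ge\frac14-5\delta\}$. Algorithm $\mathtt{approxMMS1}(\mathcal{I},\delta)$: $\alpha=3/4+\delta$, bags $B_1,\dots,B_n$. Phase 1: while some unassigned agent $i$ and unassigned bag $B$ have $v_i(B)\ge\alpha$, assign such $B$ to an agent valuing it at least $\alpha$, choosing an agent of $N^1_1$ whenever one qualifies. Phase 2: process remaining bags one by one; for the current bag $B$, while no unassigned agent values it at least $\alpha$, add an arbitrary unused good with index $>2n$; then assign $B$ to an unassigned agent valuing it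 at least $\alpha$, preferring $N^1_1$. (If a good must be added but none is left, the algorithm stops.) *)

(* Defs.v *)
From HB Require Import structures.
From mathcomp Require Import all_boot all_order all_algebra.
Set Implicit Arguments. Unset Strict Implicit. Unset Printing Implicit Defensive.
Import Order.TTheory GRing.Theory Num.Theory.
Local Open Scope ring_scope.

(* Agents are 'I_n (agent i : 'I_n is agent i+1 of the paper).
   Goods are positive naturals 1..m; v i j for j > m is a dummy good (value 0).
   Bags are indexed by 'I_n: bag k : 'I_n is the paper's B_{k+1}. *)

Section ApproxMMS1.
Context {R : realFieldType} (n m : nat) (v : 'I_n -> nat -> R) (delta : R).

Definition alpha : R := 3/4 + delta.

Definition bval (i : 'I_n) (s : seq nat) : R := \sum_(j <- s) v i j.

Definition valuations_ok : Prop :=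
  (forall i j, 0 <= v i j) /\ (forall i j, (m < j)%N -> v i j = 0).

Definition ordered : Prop :=
  forall i j, (1 <= j < m)%N -> v i j.+1 <= v i j.

Definition normalized : Prop :=
  forall i, exists f : nat -> 'I_n,
    forall k : 'I_n, \sum_(1 <= j < m.+1 | f j == k) v i j = 1.

Definition irreducible (a : R) : Prop :=
  forall i,
    [/\ v i 1 < a,
        bval i [:: (2 * n).-1; (2 * n)%N; (2 * n).+1] < a,
        bval i [:: (3 * n - 2)%N; (3 * n).-1; (3 * n)%N; (3 * n).+1] < a
      & bval i [:: 1%N; (2 * n).+1] < a].

Definition ONI : Prop := [/\ ordered, normalized & irreducible alpha].

Definition bagB (k : 'I_n) : seq nat := [:: k.+1; (2 * n - k)%N].

Definition inN1 (i : 'I_n) : bool := [forall k : 'I_n, bval i (bagB k) <= 1].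
Definition inN11 (i : 'I_n) : bool :=
  inN1 i && (1/4 - 5 * delta <= v i (2 * n).+1).
Definition N1 : {set 'I_n} := [set i | inN1 i].
Definition N11 : {set 'I_n} := [set i | inN11 i].
Definition N2 : {set 'I_n} := [set i | ~~ inN1 i].

Record state := St {
  bags : 'I_n -> seq nat;
  owner : 'I_n -> option 'I_n;
  phase2 : bool;
  cur : option 'I_n
}.

Definition init : state := St bagB (fun _ => None) false None.

Definition agent_free (s : state) (i : 'I_n) : bool :=
  [forall k, owner s k != Some i].
Definition bag_free (s : state) (k : 'I_n) : bool := owner s k == None.
Definition qualifies (s : state) (i : 'I_n) (k : 'I_n) : bool :=
  agent_free s i && (alpha <= bval i (bags s k)).
Definition good_choice (s : state) (i k : 'I_n) : bool :=
  qualifies s i k &&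
  (inN11 i || ~~ [exists i', qualifies s i' k && inN11 i']).
Definition used (s : state) (g : nat) : bool := [exists k, g \in bags s k].

Definition assign (s : state) (k i : 'I_n) : state :=
  St (bags s) (fun k' => if k' == k then Some i else owner s k') (phase2 s) None.
Definition addgood (s : state) (k : 'I_n) (g : nat) : state :=
  St (fun k' => if k' == k then rcons (bags s k) g else bags s k')
     (owner s) (phase2 s) (cur s).

Inductive step : state -> state -> Prop :=
  | step_p1 s k i :
      ~~ phase2 s -> bag_free s k -> good_choice s i k -> step s (assign s k i)
  | step_p12 s :
      ~~ phase2 s -> ~~ [exists k, exists i, bag_free s k && qualifies s i k] ->
      step s (St (bags s) (owner s) true None)
  (* Phase 2: start processing a remaining bag (in arbitrary order) *)
  | step_pick s k :
      phase2 s -> cur s = None -> bag_free s k ->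
      step s (St (bags s) (owner s) true (Some k))
  | step_add s k g :
      phase2 s -> cur s = Some k -> ~~ [exists i, qualifies s i k] ->
      (2 * n < g <= m)%N -> ~~ used s g -> step s (addgood s k g)
  | step_asg s k i :
      phase2 s -> cur s = Some k -> good_choice s i k -> step s (assign s k i).

Inductive reachable : state -> Prop :=
  | reach_init : reachable init
  | reach_step s s' : reachable s -> step s s' -> reachable s'.

(* end of the algorithm: no further step possible (includes the case where
   a good must be added but none is left) *)
Definition final (s : state) : Prop := ~ exists s', step s s'.

End ApproxMMS1.

(* Main.v *)
Require Import Defs.
From HB Require Import structures.
From mathcomp Require Import all_boot all_order all_algebra.
From mathcomp Require Import zify ring lra.
Import Order.TTheory GRing.Theory Num.Theory.
Local Open Scope ring_scope.
Lemma ptrans {T : eqType} {s1 s2 s3 : seq T} :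
  perm_eq s1 s2 -> perm_eq s2 s3 -> perm_eq s1 s3.
Proof. exact: perm_trans. Qed.
Lemma psym {T : eqType} {s1 s2 : seq T} : perm_eq s1 s2 -> perm_eq s2 s1.
Proof. by rewrite perm_sym. Qed.

Section Gen.
Variable R : realFieldType.
Implicit Types (b : R) (M : seq (R * R)) (ys : seq R).

Definition phi b (s : R) : R := if s <= b then b else s.
Lemma phi_ge_b b s : b <= phi b s. Proof. rewrite /phi; case: ifP => //; lra. Qed.
Lemma phi_ge_s b s : s <= phi b s. Proof. rewrite /phi; case: ifP => //; lra. Qed.
Lemma phi_le {b s c} : s <= c -> b <= c -> phi b s <= c. Proof. by rewrite /phi; case: ifP. Qed.
Lemma phi_cases b s : phi b s = b /\ s <= b \/ phi b s = s /\ b < s.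
Proof. rewrite /phi; case: ifP => h; [left|right]; split => //. by rewrite ltNge h. Qed.

Definition pflat M : seq R := flatten [seq [:: e.1; e.2] | e <- M].
Definition cost b M : R := \sum_(e <- M) phi b (e.1 + e.2).

Lemma pflat_cons u w M : pflat ((u, w) :: M) = u :: w :: pflat M. Proof. by []. Qed.
Lemma cost_cons b u w M : cost b ((u, w) :: M) = phi b (u + w) + cost b M.
Proof. by rewrite /cost big_cons. Qed.
Lemma cost_nil b : cost b [::] = 0. Proof. by rewrite /cost big_nil. Qed.
Lemma size_pflat M : size (pflat M) = (2 * size M)%N.
Proof. elim: M => [|[u w] M IH] //=. rewrite IH. lia. Qed.

Lemma extract b x M : x \in pflat M -> exists u M',
  perm_eq (pflat M) (x :: u :: pflat M') /\ cost b M = phi b (x + u) + cost b M'.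
Proof.
elim: M => [|[e1 e2] M IH] //=.
rewrite !inE => /orP [/eqP -> | /orP [/eqP -> | xin]].
- exists e2, M; split => //. by rewrite cost_cons.
- exists e1, M; split.
  + by rewrite pflat_cons (perm_catCA [:: e1] [:: e2]).
  + by rewrite cost_cons (addrC e1).
- have [u [M' [hp hc]]] := IH xin.
  exists u, ((e1, e2) :: M'); split.
  + rewrite pflat_cons.
    apply: (@ptrans _ _ ([:: e1; e2] ++ [:: x; u] ++ pflat M')).
      by rewrite /= !perm_cons.
    by rewrite perm_catCA.
  + by rewrite !cost_cons hc addrCA.
Qed.

Definition anti b p ys : R := \sum_(k < p) phi b (nth 0 ys k + nth 0 ys (2 * p - k.+1)).
Definition srt ys := forall i j, (i <= j < size ys)%N -> nth 0 ys j <= nth 0 ys i.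

Lemma exch b y z u w : z <= u -> u <= y -> z <= w -> w <= y ->
  phi b (y + z) + phi b (u + w) <= phi b (y + u) + phi b (z + w).
Proof.
move=> h1 h2 h3 h4.
case: (phi_cases b (y+z)) => [[-> ?]|[-> ?]];
case: (phi_cases b (u+w)) => [[-> ?]|[-> ?]];
case: (phi_cases b (y+u)) => [[-> ?]|[-> ?]];
case: (phi_cases b (z+w)) => [[-> ?]|[-> ?]]; lra.
Qed.

Lemma anti_split b p y mid z : size mid = (2 * p)%N ->
  anti b p.+1 (y :: rcons mid z) = phi b (y + z) + anti b p mid.
Proof.
move=> hs; rewrite /anti big_ord_recl /=.
have -> : (2 * p.+1 - 1 = (2 * p).+1)%N by lia.
rewrite /= nth_rcons hs ltnn eqxx; congr (_ + _).
apply: eq_bigr => i _ /=.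
have hi := ltn_ord i.
have -> : (2 * p.+1 - i.+2 = (2 * p - i.+1).+1)%N by lia.
by rewrite /= !nth_rcons hs !ifT //; lia.
Qed.

Lemma M1 b p ys M : size ys = (2 * p)%N -> srt ys -> perm_eq (pflat M) ys ->
  anti b p ys <= cost b M.
Proof.
elim: p ys M => [|p IH] ys M hs hsrt hp.
  have := perm_size hp; rewrite size_pflat hs => /eqP.
  rewrite muln_eq0 /= => /eqP/size0nil ->.
  by rewrite /anti big_ord0 cost_nil.
case: ys hs hsrt hp => [|y ys1] //= hs hsrt hp.
case/lastP: ys1 hs hsrt hp => [|mid z] hs hsrt hp; first by move: hs => /=; lia.
rewrite /= size_rcons in hs.
have hsm : size mid = (2 * p)%N by lia.
rewrite anti_split //.
have hsz : size (y :: rcons mid z) = (2 * p).+2 by rewrite /= size_rcons hsm.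
have ymax : forall w, w \in y :: rcons mid z -> w <= y.
  move=> w win; rewrite -(nth_index 0 win).
  have := hsrt 0%N (index w (y :: rcons mid z)); rewrite /= => -> //.
  by rewrite -index_mem in win; rewrite /= in win.
have zmin : forall w, w \in y :: rcons mid z -> z <= w.
  move=> w win; rewrite -(nth_index 0 win).
  have hz : nth 0 (y :: rcons mid z) (2 * p).+1 = z.
    by rewrite /= nth_rcons hsm ltnn eqxx.
  have h := hsrt (index w (y :: rcons mid z)) (2 * p).+1.
  rewrite hz in h; apply: h.
  rewrite -index_mem in win; rewrite /= size_rcons hsm in win *. lia.
have hsrtm : srt mid.
  move=> i j hij; have := hsrt i.+1 j.+1.
  rewrite /= !nth_rcons !ifT; try lia. move=> h; apply: h. rewrite size_rcons; lia.
have yin : y \in pflat M by rewrite (perm_mem hp) mem_head.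
have [u [M' [hp1 hc1]]] := extract b _ _ yin.
have hp2 : perm_eq (u :: pflat M') (z :: mid).
  have := ptrans (psym hp1) hp.
  rewrite perm_cons => h; apply: (ptrans h). by rewrite perm_rcons.
have uin : u \in y :: rcons mid z by rewrite -(perm_mem hp) (perm_mem hp1) !inE eqxx orbT.
have zin : z \in u :: pflat M' by rewrite (perm_mem hp2) mem_head.
rewrite hc1.
case: (eqVneq z u) => [ezu|nzu].
  have hp3 : perm_eq (pflat M') mid by rewrite -ezu perm_cons in hp2.
  rewrite -ezu lerD2l. exact: IH.
move: zin; rewrite inE (negbTE nzu) /= => zin.
have [w [M'' [hp4 hc2]]] := extract b _ _ zin.
have hp5 : perm_eq (pflat ((u, w) :: M'')) mid.
  rewrite pflat_cons.
  have h6 : perm_eq (z :: u :: w :: pflat M'') (z :: mid).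
    apply: ptrans _ hp2.
    apply: (@ptrans _ _ ([:: u] ++ [:: z] ++ w :: pflat M'')).
      by rewrite (perm_catCA [:: z] [:: u]).
    by rewrite /= perm_cons perm_sym.
  by rewrite perm_cons in h6.
have win : w \in y :: rcons mid z.
  rewrite -(perm_mem hp) (perm_mem hp1) !inE (perm_mem hp4) !inE eqxx.
  by rewrite !orbT.
have := IH mid _ hsm hsrtm hp5.
rewrite cost_cons hc2 => h.
have hex := @exch b y z u w (zmin _ uin) (ymax _ uin) (zmin _ win) (ymax _ win).
lra.
Qed.

Implicit Types (a : R) (G : seq R) (gs : seq (seq R)).

Definition gsum G : R := \sum_(x <- G) x.
Definition ok1 a G := (gsum G <= 1) && all (fun x => (0 <= x) && (x <= a)) G.
Definition okG a gs := all (ok1 a) gs.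
Definition tot gs := sumn (map size gs).

Lemma pick (P : pred (seq R)) gs : has P gs -> exists G gs', perm_eq gs (G :: gs') /\ P G.
Proof. move=> /hasP [G Gin PG]; exists G, (rem G gs); split => //; exact: perm_to_rem. Qed.

Lemma decomp a gs G gs' : perm_eq gs (G :: gs') ->
  [/\ size gs = (size gs').+1, tot gs = (size G + tot gs')%N,
      okG a gs = ok1 a G && okG a gs' & perm_eq (flatten gs) (G ++ flatten gs')].
Proof.
move=> hp; split.
- by rewrite (perm_size hp).
- by rewrite /tot (perm_sumn (perm_map size hp)).
- by rewrite /okG (perm_all _ hp).
- by rewrite (perm_flatten hp).
Qed.

Lemma gsum_cons x G : gsum (x :: G) = x + gsum G. Proof. by rewrite /gsum big_cons. Qed.

Lemma sum_ge_min r G : all (fun x => r <= x) G -> (size G)%:R * r <= gsum G.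
Proof.
elim: G => [|x G IH] /=; first by rewrite /gsum big_nil mul0r.
move=> /andP [hx hG]; rewrite gsum_cons -addn1 natrD mulrDl mul1r addrC.
exact: lerD hx (IH hG).
Qed.

Lemma minex G : (0 < size G)%N -> exists r G', perm_eq G (r :: G') /\ all (fun x => r <= x) G'.
Proof.
elim: G => [|x G IH] //= _.
case: G IH => [|y G0] IH; first by exists x, [::].
have [r0 [G0' [hp hall]]] := IH isT.
case: (lerP x r0) => hxr.
  exists x, (y :: G0); split => //.
  rewrite (perm_all _ hp) /= hxr /=.
  apply/allP => z zin; apply: le_trans hxr _; exact: (allP hall).
exists r0, (x :: G0'); split.
  apply: (@ptrans _ _ (x :: r0 :: G0')); first by rewrite perm_cons.
  by rewrite (perm_catCA [:: x] [:: r0]).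
by rewrite /= (ltW hxr) hall.
Qed.

Lemma minpick {a G} : (0 < size G)%N -> ok1 a G -> exists r G',
  [/\ perm_eq G (r :: G'), ok1 a G', (0 <= r) && (r <= a),
      (size G)%:R * r <= gsum G & (gsum G = r + gsum G') /\ size G = (size G').+1].
Proof.
move=> hs hok; have [r [G' [hp hall]]] := minex _ hs.
have hsum : gsum G = r + gsum G' by rewrite /gsum (perm_big _ hp) big_cons.
have hsz : size G = (size G').+1 by rewrite (perm_size hp).
move: hok; rewrite /ok1 (perm_all _ hp) /= => /andP [hle /andP [hr hG']].
have hpos : 0 <= gsum G'.
  rewrite /gsum big_seq; apply: sumr_ge0 => x xin.
  by have /andP [] := allP hG' x xin.
exists r, G'; split => //.
- rewrite /ok1 hG' andbT; move: hle; rewrite hsum.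
  by move/andP: hr => [hr0 _] => h; lra.
- rewrite hsz -addn1 natrD mulrDl mul1r hsum addrC lerD2l.
  exact: sum_ge_min.
Qed.

Lemma has_big gs : (2 * size gs < tot gs)%N -> has (fun G => 2 < size G)%N gs.
Proof.
elim: gs => [|G gs IH] //=; rewrite /tot /= => h.
case: (ltnP 2 (size G)) => //= hG; apply: IH; rewrite /tot; lia.
Qed.

Lemma has_small gs : (tot gs < 2 * size gs)%N -> has (fun G => size G < 2)%N gs.
Proof.
elim: gs => [|G gs IH] //=; rewrite /tot /= => h.
case: (ltnP (size G) 2) => //= hG; apply: IH; rewrite /tot; lia.
Qed.

Lemma all_ge3 gs : all (fun G => 3 <= size G)%N gs -> (3 * size gs <= tot gs)%N.
Proof. elim: gs => [|G gs IH] //= /andP [h1 h2]; rewrite /tot /=. have := IH h2; rewrite /tot; lia. Qed.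


Lemma pcat2r {T : eqType} (s1 s2 s : seq T) : perm_eq s1 s2 -> perm_eq (s1 ++ s) (s2 ++ s).
Proof. by rewrite perm_cat2r. Qed.

Lemma kr_le k {G} {r s : R} : (k <= size G)%N -> 0 <= r -> (size G)%:R * r <= s -> k%:R * r <= s.
Proof. move=> hk hr h; apply: le_trans h; apply: ler_wpM2r => //; by rewrite ler_nat. Qed.

Lemma ok1_sum {a G} : ok1 a G -> gsum G <= 1. Proof. by case/andP. Qed.
Lemma ok1_el {a G x} : ok1 a G -> x \in G -> 0 <= x /\ x <= a.
Proof. by case/andP => _ /allP h /h /andP. Qed.

Lemma natS (p : nat) : (p.+1)%:R = p%:R + 1 :> R. Proof. by rewrite mulrSr. Qed.

Lemma M2 a b : 0 <= a -> a <= 4/5 -> b <= 1 -> a + 1/3 + b <= 2 ->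
  2 * a + 7/12 + b <= 3 -> a + 1/4 + 2 * b <= 3 ->
  forall p gs, size gs = p -> tot gs = (2 * p)%N -> okG a gs ->
  exists M, perm_eq (pflat M) (flatten gs) /\ cost b M <= p%:R.
Proof.
move=> ha0 ha hb1 hc3 hc4 hc4'.
elim/ltn_ind => p IH gs hsz htot hok.
case: p IH hsz htot => [|p] IH hsz htot.
  move/size0nil: hsz => ->; exists [::]; split => //; by rewrite cost_nil.
case: (boolP (has (fun G => size G == 2)%N gs)) => [hB|nB].
  have [G [gs1 [hp /eqP hG2]]] := pick _ _ hB.
  have [hs1 ht1 ho1 hf1] := decomp a _ _ _ hp.
  move: ho1; rewrite hok => /esym/andP [hokG hok1].
  case: G hG2 hp hs1 ht1 hf1 hokG => [|u [|w [|? ?]]] // _ hp hs1 ht1 hf1 hokG.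
  have hs1' : size gs1 = p by clear - hs1 hsz; lia.
  have ht1' : tot gs1 = (2 * p)%N by move: ht1; rewrite htot /=; clear; lia.
  have [M' [hM' hc']] := IH p (ltnSn p) gs1 hs1' ht1' hok1.
  exists ((u, w) :: M'); split.
    rewrite pflat_cons; apply: ptrans _ (psym hf1); by rewrite /= !perm_cons.
  rewrite cost_cons natS.
  have hs : gsum [:: u; w] <= 1 := ok1_sum hokG.
  rewrite /gsum !big_cons big_nil addr0 in hs.
  have := phi_le hs hb1; lra.
case: (boolP (has (fun G => size G == 0)%N gs)) => [hC|nC].
  have [E [gs1 [hp /eqP hE0]]] := pick _ _ hC.
  have [hs1 ht1 ho1 hf1] := decomp a _ _ _ hp.
  move: ho1; rewrite hok => /esym/andP [_ hok1].
  case: E hE0 hp hs1 ht1 hf1 => [|? ?] // _ hp hs1 ht1 hf1.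
  have hs1' : size gs1 = p by clear - hs1 hsz; lia.
  have ht1' : tot gs1 = (2 * p.+1)%N by move: ht1; rewrite htot.
  have [G1 [gs2 [hpG1 hG1]]] : exists G1 gs2, perm_eq gs1 (G1 :: gs2) /\ (2 < size G1)%N.
    apply: pick; apply: has_big; clear - hs1' ht1'; lia.
  have [hs2 ht2 ho2 hf2] := decomp a _ _ _ hpG1.
  move: ho2; rewrite hok1 => /esym/andP [hokG1 hok2].
  have hG1p : (0 < size G1)%N by clear - hG1; lia.
  have [r [G1' [hpr hokG1' /andP [hr0 hra] hkr [hsumG1 hszG1]]]] := minpick hG1p hokG1.
  have [G2 [hs2' [hpG2 hG2]]] : exists G2 hs2', perm_eq (G1' :: gs2) (G2 :: hs2') /\ (2 < size G2)%N.
    apply: pick; apply: has_big; move: ht1' ht2 hszG1 hs2 hs1'; rewrite /tot /=; clear; lia.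
  have [hs3 ht3 ho3 hf3] := decomp a _ _ _ hpG2.
  have hokh : okG a (G1' :: gs2) by rewrite /okG /= hokG1' /=; exact: hok2.
  move: ho3; rewrite hokh => /esym/andP [hokG2 hok3].
  have hG2p : (0 < size G2)%N by clear - hG2; lia.
  have [r2 [G2' [hpr2 hokG2' /andP [hr20 hr2a] hkr2 [hsumG2 hszG2]]]] := minpick hG2p hokG2.
  have [M' [hM' hc']] : exists M', perm_eq (pflat M') (flatten (G2' :: hs2')) /\ cost b M' <= p%:R.
    apply: (IH p (ltnSn p)); last by rewrite /okG /= hokG2' /=; exact: hok3.
      by move: hs3 hs2 hs1'; rewrite /=; clear; lia.
    by move: ht3 ht2 ht1' hszG1 hszG2; rewrite /tot /=; clear; lia.
  exists ((r, r2) :: M'); split.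
    rewrite pflat_cons; apply: ptrans _ (psym hf1) => /=.
    apply: ptrans _ (psym hf2); apply: ptrans _ (pcat2r _ _ _ (psym hpr)) => /=.
    rewrite perm_cons; apply: ptrans _ (psym hf3); apply: ptrans _ (pcat2r _ _ _ (psym hpr2)) => /=.
    by rewrite perm_cons.
  rewrite cost_cons natS.
  have h1 := kr_le 3 hG1 hr0 hkr; have h2 := kr_le 3 hG2 hr20 hkr2.
  have h3 := ok1_sum hokG1; have h4 := ok1_sum hokG2.
  have : phi b (r + r2) <= 1 by apply: phi_le => //; lra.
  lra.
have hS : has (fun G => size G < 2)%N gs.
  case: (boolP (has (fun G => size G < 2)%N gs)) => // nS; exfalso.
  have h3 : all (fun G => 3 <= size G)%N gs.
    apply/allP => G Gin.
    have := hasPn nS G Gin; have := hasPn nB G Gin; clear; move=> /= h1 h2; lia.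
  have := all_ge3 _ h3; rewrite htot hsz; clear; lia.
have [H [gs1 [hp hH]]] := pick _ _ hS.
have Hin : H \in gs by rewrite (perm_mem hp) mem_head.
have hH0 := hasPn nC H Hin.
have [hs1 ht1 ho1 hf1] := decomp a _ _ _ hp.
move: ho1; rewrite hok => /esym/andP [hokH hok1].
case: H hH hH0 Hin hp hs1 ht1 hf1 hokH => [|g [|? ?]] // _ _ Hin hp hs1 ht1 hf1 hokH.
have [hg0 hga] := ok1_el hokH (mem_head g [::]).
have hs1' : size gs1 = p by clear - hs1 hsz; lia.
have ht1' : tot gs1 = (2 * p).+1 by move: ht1; rewrite htot /=; clear; lia.
have [G [gs2 [hpG hG]]] : exists G gs2, perm_eq gs1 (G :: gs2) /\ (2 < size G)%N.
  apply: pick; apply: has_big; clear - hs1' ht1'; lia.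
have Gin : G \in gs by rewrite (perm_mem hp) inE (perm_mem hpG) mem_head orbT.
have [hs2 ht2 ho2 hf2] := decomp a _ _ _ hpG.
move: ho2; rewrite hok1 => /esym/andP [hokG hok2].
have hGp : (0 < size G)%N by clear - hG; lia.
have [r [G' [hpr hokG' /andP [hr0 hra] hkr [hsumG hszG]]]] := minpick hGp hokG.
have hsG := ok1_sum hokG.
case: (lerP (g + r) 1) => hgr.
  have [M' [hM' hc']] : exists M', perm_eq (pflat M') (flatten (G' :: gs2)) /\ cost b M' <= p%:R.
    apply: (IH p (ltnSn p)); last by rewrite /okG /= hokG' /=; exact: hok2.
      by move: hs2 hs1'; rewrite /=; clear; lia.
    by move: ht2 ht1' hszG; rewrite /tot /=; clear; lia.
  exists ((g, r) :: M'); split.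
    rewrite pflat_cons; apply: ptrans _ (psym hf1) => /=; rewrite perm_cons.
    apply: ptrans _ (psym hf2); apply: ptrans _ (pcat2r _ _ _ (psym hpr)) => /=.
    by rewrite perm_cons.
  rewrite cost_cons natS.
  have : phi b (g + r) <= 1 by apply: phi_le.
  lra.
have hphi1 : phi b (g + r) = g + r.
  case: (phi_cases b (g + r)) => [[_ ?]|[-> _]] //; lra.
case: (ltnP (size G) 5) => h5; last first.
  have := kr_le 5 h5 hr0 hkr; lra.
have hG34 : (size G = 3 \/ size G = 4)%N by clear - hG h5; lia.
case: hG34 => hG34.
  case: G' hpr hokG' hsumG hszG => [|u [|w [|? ?]]] // hpr hokG' hsumG hszG; try by rewrite hG34 in hszG.
  have [M' [hM' hc']] : exists M', perm_eq (pflat M') (flatten gs2) /\ cost b M' <= p.-1%:R.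
    apply: (IH p.-1); first by clear - hs1'; lia.
    - by move: hs2 hs1'; rewrite /=; clear; lia.
    - by move: ht2 ht1' hszG hs2 hs1'; rewrite /tot /=; clear; lia.
    - exact: hok2.
  exists ((g, r) :: (u, w) :: M'); split.
    rewrite !pflat_cons; apply: ptrans _ (psym hf1) => /=; rewrite perm_cons.
    apply: ptrans _ (psym hf2); apply: ptrans _ (pcat2r _ _ _ (psym hpr)) => /=.
    by rewrite !perm_cons.
  have hp1 : p = p.-1.+1 by move: hs2 hs1'; rewrite /=; clear; lia.
  rewrite !cost_cons hphi1 [in X in _ <= X]hp1 !natS.
  have h1 := kr_le 3 hG hr0 hkr.
  rewrite /gsum !big_cons big_nil in hsumG.
  rewrite /gsum in hsG h1.
  case: (phi_cases b (u + w)) => [[-> ?]|[-> ?]]; lra.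
have hG'p : (0 < size G')%N by clear - hszG hG34; lia.
have [r2 [G'' [hpr2 hokG'' /andP [hr20 hr2a] hkr2 [hsumG' hszG']]]] := minpick hG'p hokG'.
case: G'' hpr2 hokG'' hsumG' hszG' => [|u [|w [|? ?]]] // hpr2 hokG'' hsumG' hszG'; try by (rewrite hszG' hG34 in hszG).
have Hsm : has (fun G => size G < 2)%N gs2.
  apply: has_small; move: ht2 ht1' hszG hs2 hs1'; rewrite /tot /= hG34; clear; lia.
have [H2 [gs3 [hp3 hH2]]] := pick _ _ Hsm.
have H2in : H2 \in gs.
  by rewrite (perm_mem hp) inE (perm_mem hpG) inE (perm_mem hp3) mem_head !orbT.
have hH20 := hasPn nC H2 H2in.
have [hs3 ht3 ho3 hf3] := decomp a _ _ _ hp3.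
move: ho3; rewrite hok2 => /esym/andP [hokH2 hok3].
case: H2 hH2 hH20 H2in hp3 hs3 ht3 hf3 hokH2 => [|g2 [|? ?]] // _ _ H2in hp3 hs3 ht3 hf3 hokH2.
have [hg20 hg2a] := ok1_el hokH2 (mem_head g2 [::]).
have [M' [hM' hc']] : exists M', perm_eq (pflat M') (flatten gs3) /\ cost b M' <= (size gs3)%:R.
  apply: (IH (size gs3)); first by move: hs3 hs2 hs1'; rewrite /=; clear; lia.
  - by [].
  - by move: ht3 ht2 ht1' hszG hszG' hs3 hs2 hs1' hG34; rewrite /tot /=; clear; lia.
  - exact: hok3.
exists ((g, r) :: (g2, r2) :: (u, w) :: M'); split.
  rewrite !pflat_cons; apply: ptrans _ (psym hf1) => /=; rewrite perm_cons.
  apply: ptrans _ (psym hf2); apply: ptrans _ (pcat2r _ _ _ (psym hpr)) => /=.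
  rewrite perm_cons; apply: ptrans _ (pcat2r _ _ _ (psym hpr2)) => /=.
  apply: (@ptrans _ _ ([:: r2; u; w] ++ [:: g2] ++ pflat M')).
    by rewrite (perm_catCA [:: g2] [:: r2; u; w]).
  rewrite /= !perm_cons; apply: ptrans _ (psym hf3) => /=; by rewrite perm_cons.
have hp1 : p = (size gs3).+2 by move: hs3 hs2 hs1'; rewrite /=; clear; lia.
rewrite !cost_cons hphi1 [in X in _ <= X]hp1 !natS.
have h4G : (4 <= size G)%N by rewrite hG34.
have h1 := kr_le 4 h4G hr0 hkr.
have h3G' : (3 <= size G')%N by rewrite hszG'.
have h2 := kr_le 3 h3G' hr20 hkr2.
rewrite /gsum !big_cons big_nil in hsumG'.
rewrite /gsum in hsumG h1 h2 hsG.
case: (phi_cases b (g2 + r2)) => [[-> ?]|[-> ?]];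
case: (phi_cases b (u + w)) => [[-> ?]|[-> ?]]; lra.
Qed.
End Gen.
Arguments phi {R}. Arguments pflat {R}. Arguments cost {R}. Arguments anti {R}.
Arguments srt {R}. Arguments M1 {R}. Arguments M2 {R}. Arguments okG {R}. Arguments ok1 {R}.
Arguments tot {R}. Arguments gsum {R}. Arguments phi_le {R}. Arguments phi_cases {R}. Arguments phi_ge_b {R}. Arguments phi_ge_s {R}.


Lemma perm_part (T : eqType) (I : finType) (f : T -> I) (s : seq T) :
  perm_eq (flatten [seq [seq j <- s | f j == k] | k <- enum I]) s.
Proof.
apply/permP => P; rewrite count_flatten -map_comp.
elim: s => [|x s IH] /=.
  rewrite (eq_map (_ : _ =1 fun _ => 0%N)); last by move=> k.
  by elim: (enum I).
rewrite -IH.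
have -> : [seq (count P \o (fun k => [seq j <- x :: s | f j == k])) k | k <- enum I] =
  [seq ((f x == k) && P x) + (count P \o (fun k => [seq j <- s | f j == k])) k | k <- enum I]%N.
  apply: eq_map => k /=; by case: (f x == k).
rewrite !sumnE !big_map big_split /=; congr (_ + _)%N.
rewrite (bigD1_seq (f x)) //=.
- rewrite eqxx big1_seq ?addn0 // => k /andP [hk _].
  by rewrite eq_sym (negbTE hk).
- exact: mem_index_enum.
- exact: index_enum_uniq.
Qed.

Section Inst.
Variables (R : realFieldType) (n m : nat) (v : 'I_n -> nat -> R) (delta : R).
Hypothesis hv : valuations_ok m v.
Hypothesis ho : ordered m v.

Lemma vge0 i j : 0 <= v i j. Proof. by case: hv. Qed.
Lemma vbig i j : (m < j)%N -> v i j = 0. Proof. by case: hv => _ h; apply: h. Qed.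

Lemma step1 i j : (1 <= j)%N -> v i j.+1 <= v i j.
Proof.
move=> hj; case: (ltnP j m) => hjm.
  apply: ho; by rewrite hj hjm.
by rewrite vbig ?vge0 // ltnS.
Qed.

Lemma chain i j1 j2 : (1 <= j1)%N -> (j1 <= j2)%N -> v i j2 <= v i j1.
Proof.
move=> h1; elim: j2 => [|j2 IH] h.
  by move: h1 h; clear; lia.
case: (ltnP j1 j2.+1) => h'.
  have h2 : (1 <= j2)%N by move: h1 h'; clear; lia.
  have h3 : (j1 <= j2)%N by move: h'; clear; lia.
  exact: le_trans (step1 i j2 h2) (IH h3).
have -> : j2.+1 = j1 by move: h h'; clear; lia.
by [].
Qed.

Lemma total (hn : normalized m v) i : \sum_(1 <= j < m.+1) v i j = n%:R.
Proof.
have [f hf] := hn i.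
have -> : n%:R = \sum_(k < n) (1 : R) by rewrite sumr_const card_ord.
rewrite -(eq_bigr _ (fun k _ => hf k)).
rewrite (exchange_big_dep xpredT) //=; apply: eq_bigr => j _.
by rewrite (big_pred1 (f j)) // => k /=; rewrite andbT eq_sym.
Qed.

End Inst.
Arguments vge0 {R n m v}. Arguments vbig {R n m v}. Arguments step1 {R n m v}.
Arguments chain {R n m v}. Arguments total {R n m v}.

Section Inst2.
Variables (R : realFieldType) (n m : nat) (v : 'I_n -> nat -> R).
Hypothesis hv : valuations_ok m v.
Hypothesis ho : ordered m v.

Lemma key (hn : normalized m v) i (a b : R) : 0 <= a -> v i 1 <= a -> a <= 4/5 -> b <= 1 ->
  a + 1/3 + b <= 2 -> 2 * a + 7/12 + b <= 3 -> a + 1/4 + 2 * b <= 3 ->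
  \sum_(k < n) phi b (bval v i (bagB k)) <= n%:R.
Proof.
move=> ha0 ha1 ha hb h3 h4 h5.
have [f hf] := hn i.
pose s := iota 1 (2 * n).
pose ys := [seq v i j | j <- s].
pose gs := [seq [seq v i j | j <- s & f j == k] | k <- enum 'I_n].
have hperm : perm_eq (flatten gs) ys.
  have -> : gs = map (map (v i)) [seq [seq j <- s | f j == k] | k <- enum 'I_n].
    by rewrite -map_comp.
  rewrite -map_flatten; apply: perm_map; exact: perm_part.
have hszg : size gs = n by rewrite size_map size_enum_ord.
have hsy : size ys = (2 * n)%N by rewrite size_map size_iota.
have htot : tot gs = (2 * n)%N.
  by rewrite /tot -/(shape gs) -size_flatten (perm_size hperm).
have hok : okG a gs.
  apply/allP => G /mapP [k _ ->]; rewrite /ok1; apply/andP; split.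
    rewrite /gsum big_map big_filter -(hf k).
    pose N := maxn (2 * n) m.
    have e1 : \sum_(j <- iota 1 N | f j == k) v i j =
        \sum_(j <- s | f j == k) v i j + \sum_(j <- iota (1 + 2 * n) (N - 2 * n) | f j == k) v i j.
      by rewrite -big_cat -iotaD subnKC // leq_maxl.
    have e2 : \sum_(j <- iota 1 N | f j == k) v i j =
        \sum_(j <- iota 1 m | f j == k) v i j + \sum_(j <- iota (1 + m) (N - m) | f j == k) v i j.
      by rewrite -big_cat -iotaD subnKC // leq_maxr.
    have e3 : \sum_(j <- iota (1 + m) (N - m) | f j == k) v i j = 0.
      rewrite big1_seq // => j /andP [_]; rewrite mem_iota => /andP [hj _].
      apply: (vbig hv); move: hj; clear; lia.
    have e4 : 0 <= \sum_(j <- iota (1 + 2 * n) (N - 2 * n) | f j == k) v i j.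
      by apply: sumr_ge0 => j _; apply: (vge0 hv).
    have -> : index_iota 1 m.+1 = iota 1 m by rewrite /index_iota subn1.
    lra.
  apply/allP => y /mapP [j]; rewrite mem_filter => /andP [_ jin] ->.
  move: jin; rewrite mem_iota => /andP [hj _].
  rewrite (vge0 hv) /=; apply: le_trans ha1; exact: (chain hv ho).
have [M [hpM hcM]] := M2 a b ha0 ha hb h3 h4 h5 _ _ hszg htot hok.
have hsrt : srt ys.
  move=> p q /andP [hpq hq]; rewrite hsy in hq.
  rewrite !(nth_map 0%N) ?size_iota; try (move: hpq hq; clear; lia).
  rewrite !nth_iota; try (move: hpq hq; clear; lia).
  apply: (chain hv ho) => //; move: hpq; clear; lia.
have := M1 b _ _ _ hsy hsrt (ptrans hpM hperm).
have -> : anti b n ys = \sum_(k < n) phi b (bval v i (bagB k)).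
  rewrite /anti; apply: eq_bigr => k _.
  have hk := ltn_ord k.
  rewrite /bval /bagB !big_cons big_nil addr0.
  rewrite !(nth_map 0%N) ?size_iota; try (move: hk; clear; lia).
  rewrite !nth_iota; try (move: hk; clear; lia).
  have -> : (1 + (2 * n - k.+1) = 2 * n - k)%N by move: hk; clear; lia.
  by rewrite add1n.
lra.
Qed.
End Inst2.
Arguments key {R n m v}.

Lemma D1 (R : realFieldType) (n m : nat) (v : 'I_n -> nat -> R)
  (hv : valuations_ok m v) (ho : ordered m v) (hn : normalized m v) i :
  ~~ inN1 v i -> 2/3 < v i 1.
Proof.
rewrite ltNge; apply: contra => h.
have hk := key hv ho hn i (2/3) 1 ltac:(lra) h ltac:(lra) ltac:(lra) ltac:(lra) ltac:(lra) ltac:(lra).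
apply/forallP => k.
have e : \sum_(j < n) (phi 1 (bval v i (bagB j)) - 1) <= 0.
  by rewrite sumrB sumr_const card_ord; lra.
have : phi 1 (bval v i (bagB k)) - 1 <= \sum_(j < n) (phi 1 (bval v i (bagB j)) - 1).
  rewrite (bigD1 k) //= lerDl; apply: sumr_ge0 => j _.
  have := phi_ge_b 1 (bval v i (bagB j)); lra.
have := phi_ge_s 1 (bval v i (bagB k)); lra.
Qed.

Section Alg.
Variables (R : realFieldType) (n m : nat) (v : 'I_n -> nat -> R) (delta : R).
Hypothesis hv : valuations_ok m v.
Hypothesis ho : ordered m v.
Implicit Types (s : state n) (k i : 'I_n).

Definition fl (s : state n) : seq nat := flatten [seq bags s k | k <- enum 'I_n].

Lemma used_fl s g : used s g = (g \in fl s).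
Proof.
apply/existsP/flatten_mapP => [[k hk]|[k _ hk]]; last by exists k.
by exists k => //; rewrite mem_enum.
Qed.

Lemma fl_addgood s k g : perm_eq (fl (addgood s k g)) (g :: fl s).
Proof.
rewrite /fl /addgood /=.
have : uniq (enum 'I_n) by exact: enum_uniq.
have : k \in enum 'I_n by rewrite mem_enum.
elim: (enum 'I_n) => [|k' e IH] //= kin /andP [k'e ue].
case: (eqVneq k' k) => [ek|nk].
  subst k'.
  have -> : [seq (if k'' == k then rcons (bags s k) g else bags s k'') | k'' <- e] =
            [seq bags s k'' | k'' <- e].
    apply/eq_in_map => k'' hk''; rewrite ifN //.
    by apply/eqP => ek; move: k'e; rewrite -ek hk''.
  by rewrite -cats1 -catA /= (perm_catCA (bags s k) [:: g]).

move: kin; rewrite inE eq_sym (negbTE nk) /= => kin.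
apply: (@ptrans _ _ (bags s k' ++ g :: flatten [seq bags s k0 | k0 <- e])).
  by rewrite perm_cat2l; apply: IH.
by rewrite (perm_catCA (bags s k') [:: g]).
Qed.

Lemma fl_init_mem g : (g \in fl (init n)) = (1 <= g <= 2 * n)%N.
Proof.
apply/flatten_mapP/idP => [[k _]|hg].
  rewrite /= /bagB !inE => /orP [] /eqP ->; have := ltn_ord k; clear; lia.
case: (leqP g n) => hgn.
  have hk : (g.-1 < n)%N by move: hg hgn; clear; lia.
  exists (Ordinal hk); first by rewrite mem_enum.
  rewrite /= /bagB inE /=; apply/orP; left; apply/eqP; move: hg; clear; lia.
have hk : (2 * n - g < n)%N by move: hg hgn; clear; lia.
exists (Ordinal hk); first by rewrite mem_enum.
rewrite /= /bagB !inE /=; apply/orP; right; apply/eqP; move: hg hgn; clear; lia.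
Qed.

Lemma size_fl_init : size (fl (init n)) = (2 * n)%N.
Proof.
rewrite /fl size_flatten /shape -map_comp /=.
rewrite (eq_map (_ : size \o (@bagB n) =1 fun _ => 2%N)) //.
have h : forall e : seq 'I_n, sumn [seq 2%N | _ <- e] = (2 * size e)%N.
  by elim => //= k e ->; clear; lia.
by rewrite h size_enum_ord.
Qed.

Lemma uniq_fl_init : uniq (fl (init n)).
Proof.
apply: (@leq_size_uniq _ (iota 1 (2 * n))); first exact: iota_uniq.
  by move=> g; rewrite mem_iota fl_init_mem; clear; move=> h; lia.
by rewrite size_fl_init size_iota.
Qed.


Definition Inv (s : state n) : Prop :=
  [/\ (forall k, cur s = Some k -> phase2 s /\ owner s k = None),
      (forall k j, owner s k = Some j -> alpha delta <= bval v j (bags s k)),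
      (forall k k' j, owner s k = Some j -> owner s k' = Some j -> k = k'),
      [/\ uniq (fl s), (forall g, g \in fl s -> (1 <= g)%N /\ (g <= 2 * n \/ g <= m)%N)
        & (forall g, (1 <= g <= 2 * n)%N -> g \in fl s)]
    & (forall i : 'I_n, agent_free s i -> forall k, bval v i (bags s k) = bval v i (bagB k) \/ 
          bval v i (bags s k) < alpha delta + v i (2 * n).+1)].

Lemma Inv_init : Inv (init n).
Proof.
split => //=.
- split; first exact: uniq_fl_init.
  + by move=> g; rewrite fl_init_mem => h; split; [|left]; move: h; clear; lia.
  + by move=> g; rewrite fl_init_mem.
- by move=> i _ k; left.
Qed.

Lemma free_assign s k i (i0 : 'I_n) : bag_free s k -> agent_free (assign s k i) i0 -> agent_free s i0.
Proof.
move=> hbf /forallP hf; apply/forallP => k'; have := hf k'; rewrite /assign /=.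
case: (eqVneq k' k) => [->|_] //= _; by move: hbf; rewrite /bag_free => /eqP ->.
Qed.

Lemma Inv_assign s k i : Inv s -> bag_free s k -> good_choice v delta s i k -> Inv (assign s k i).
Proof.
move=> [I2 I3 I4 I5 I6] hbf /andP [/andP [hfree hq] _].
split => //=.
- move=> k' j; case: (eqVneq k' k) => [->|nk] //=; first by case=> <-.
  exact: I3.
- move=> k1 k2 j.
  case: (eqVneq k1 k) => [->|n1]; case: (eqVneq k2 k) => [->|n2] //=.
  + case=> <- h2; exfalso; move/forallP: hfree => /(_ k2); by rewrite h2 eqxx.
  + move=> h1 [ej]; subst j; exfalso; move/forallP: hfree => /(_ k1); by rewrite h1 eqxx.
  + exact: I4.
- move=> i0 hf0; apply: I6; exact: free_assign hbf hf0.
Qed.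

Lemma Inv_p12 s : Inv s -> Inv (St (bags s) (owner s) true None).
Proof. by case=> I2 I3 I4 I5 I6; split. Qed.

Lemma Inv_pick s k : Inv s -> bag_free s k -> Inv (St (bags s) (owner s) true (Some k)).
Proof.
case=> I2 I3 I4 I5 I6 hbf; split => //= k' [<-]; split => //; exact/eqP.
Qed.

Lemma Inv_add s k g : Inv s -> cur s = Some k -> ~~ [exists i, qualifies v delta s i k] ->
  (2 * n < g <= m)%N -> ~~ used s g -> Inv (addgood s k g).
Proof.
move=> [I2 I3 I4 [U1 U2 U3] I6] hc hnq hg hu.
have [_ hfk] := I2 k hc.
have hp := fl_addgood s k g.
split => //=.
- move=> k' j hk'; case: (eqVneq k' k) => [ek|nk]; first by subst k'; rewrite hfk in hk'.
  by apply: I3.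
- split.
  + rewrite (perm_uniq hp) /= U1 andbT -used_fl //.
  + move=> g'; rewrite (perm_mem hp) inE => /orP [/eqP ->|]; last exact: U2.
    split; [|right]; move: hg; clear; lia.
  + by move=> g' h; rewrite (perm_mem hp) inE U3 ?orbT.
- move=> i0 hf0 k'; case: (eqVneq k' k) => [ek|nk]; last first.
    by apply: I6.
  subst k'; right => /=.
  have hlt : bval v i0 (bags s k) < alpha delta.
    rewrite ltNge; apply: contra hnq => hle; apply/existsP; exists i0.
    have hf0' : agent_free s i0 := hf0.
    by rewrite /qualifies hf0' hle.
  rewrite /bval -cats1 big_cat big_seq1 /=.
  have : v i0 g <= v i0 (2 * n).+1 by apply: (chain hv ho); move: hg; clear; lia.
  rewrite /bval in hlt; lra.
Qed.

Lemma Inv_reach s : reachable m v delta s -> Inv s.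
Proof.
elim => [|s0 s1 _ IH hst]; first exact: Inv_init.
case: hst IH => {s0 s1}.
- move=> t k i _ hbf hgc IH; exact: Inv_assign.
- move=> t _ _ IH; exact: Inv_p12.
- move=> t k _ _ hbf IH; exact: Inv_pick.
- move=> t k g _ hc hnq hg hu IH; exact: Inv_add.
- move=> t k i _ hc hgc IH; apply: Inv_assign => //.
  by case: IH => I2 _ _ _ _; case: (I2 k hc) => _ /eqP.
Qed.

End Alg.
Arguments fl {n}. Arguments used_fl {n}. Arguments Inv_reach {R n m v delta}.

Lemma sum_bags (R : realFieldType) (n : nat) (v : 'I_n -> nat -> R) (s : state n) i :
  \sum_(k < n) bval v i (bags s k) = \sum_(g <- fl s) v i g.
Proof. by rewrite /fl big_flatten big_map big_enum. Qed.

Theorem lemma28 (R : realFieldType) (n m : nat) (v : 'I_n -> nat -> R) (delta : R) :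
  0 <= delta -> delta <= 11 / 1000 ->
  valuations_ok m v ->
  ONI m v delta ->
  (#|N11 v delta|%:R <= n%:R * (1/4 - delta) / (1/4 + delta / 3)) ->
  forall s : state n, reachable m v delta s -> final m v delta s ->
  forall i, i \in N2 v ->
    exists k, owner s k = Some i /\ alpha delta <= bval v i (bags s k).
Proof.
move=> hd0 hd1 hv [ho hn hirr] _ s hr hfin i hi.
have [I2 I3 I4 [U1 U2 U3] I6] := Inv_reach hv ho s hr.
case: (boolP [exists k, owner s k == Some i]) => [/existsP [k /eqP hk]|nown].
  by exists k; split => //; apply: I3 hk.
exfalso.
have hfree : agent_free s i.
  apply/forallP => k; apply/negP => /eqP h; move/negP: nown; apply.
  by apply/existsP; exists k; rewrite h.
apply: hfin.
case hph: (phase2 s); last first.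
  case: (boolP [exists k, exists j, bag_free s k && qualifies v delta s j k]) =>
      [/existsP [k /existsP [j /andP [hbf hq]]]|hnone].
    case: (boolP [exists j', qualifies v delta s j' k && inN11 v delta j']) =>
        [/existsP [j' /andP [hq' hn']]|hno].
      exists (assign s k j'); apply: step_p1 => //; first by rewrite hph.
      by rewrite /good_choice hq' hn'.
    exists (assign s k j); apply: step_p1 => //; first by rewrite hph.
    by rewrite /good_choice hq hno orbT.
  by exists (St (bags s) (owner s) true None); apply: step_p12 => //; rewrite hph.
case hc: (cur s) => [k|].
  case: (boolP [exists j, qualifies v delta s j k]) => [/existsP [j hq]|hnq].
    case: (boolP [exists j', qualifies v delta s j' k && inN11 v delta j']) =>
        [/existsP [j' /andP [hq' hn']]|hno].
      exists (assign s k j'); apply: step_asg => //.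
      by rewrite /good_choice hq' hn'.
    exists (assign s k j); apply: step_asg => //.
    by rewrite /good_choice hq hno orbT.
  case: (boolP [exists g : 'I_m.+1, (2 * n < g)%N && ~~ used s g]) =>
      [/existsP [g /andP [hg hu]]|hnu].
    exists (addgood s k g); apply: step_add => //.
    by rewrite hg -ltnS ltn_ord.
  exfalso.
  have hlt : bval v i (bags s k) < alpha delta.
    rewrite ltNge; apply: contra hnq => hle; apply/existsP; exists i.
    by rewrite /qualifies hfree hle.
  have hall : forall g, (2 * n < g <= m)%N -> g \in fl s.
    move=> g /andP [h1 h2]; rewrite -used_fl.
    have hg : (g < m.+1)%N by rewrite ltnS.
    case: (boolP (used s g)) => // hu; exfalso.
    move/negP: hnu; apply; apply/existsP; exists (Ordinal hg).
    by rewrite /= h1 hu.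
  pose N := maxn (2 * n) m.
  have hperm : perm_eq (fl s) (iota 1 N).
    apply: uniq_perm => //; first exact: iota_uniq.
    move=> g; rewrite mem_iota; apply/idP/idP => [hg|hg].
      have [h1 h2] := U2 g hg; rewrite /N; case: h2 => h2; move: h1 h2; clear; lia.
    case: (leqP g (2 * n)) => h2.
      apply: U3; move: hg h2; clear; lia.
    apply: hall; move: hg h2; rewrite /N; clear; lia.
  have hsum : \sum_(k0 < n) bval v i (bags s k0) = n%:R.
    rewrite sum_bags (perm_big _ hperm) -(total hn i).
    have -> : index_iota 1 m.+1 = iota 1 m by rewrite /index_iota subn1.
    have e1 : \sum_(j <- iota 1 N) v i j =
        \sum_(j <- iota 1 m) v i j + \sum_(j <- iota (1 + m) (N - m)) v i j.
      by rewrite -big_cat -iotaD subnKC // leq_maxr.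
    have e3 : \sum_(j <- iota (1 + m) (N - m)) v i j = 0.
      rewrite big1_seq // => j /andP [_]; rewrite mem_iota => /andP [hj _].
      apply: (vbig hv); move: hj; clear; lia.
    by rewrite e1 e3 addr0.
  pose t := v i (2 * n).+1.
  pose b := alpha delta + t.
  have ht0 : 0 <= t := vge0 hv i _.
  have hx1 : 2/3 < v i 1 by apply: (D1 _ _ _ _ hv ho hn); rewrite inE in hi.
  have [hi1 _ _ hi4] := hirr i.
  rewrite /bval !big_cons big_nil addr0 -/t in hi4.
  have hx0 : 0 <= v i 1 := vge0 hv i _.
  have hkey := key hv ho hn i (v i 1) b hx0 (lexx _).
  rewrite /b /alpha in hkey hi1 hi4 hlt.
  have hkey' : \sum_(k0 < n) phi b (bval v i (bagB k0)) <= n%:R.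
    apply: hkey; rewrite /alpha; lra.
  have hb : forall k0, bval v i (bags s k0) <= phi b (bval v i (bagB k0)).
    move=> k0; case: (I6 i hfree k0) => [->|h]; first exact: phi_ge_s.
    apply: le_trans (phi_ge_b _ _); rewrite /b; exact: ltW.
  rewrite (bigD1 k) //= in hsum.
  rewrite (bigD1 k) //= in hkey'.
  have hrest : \sum_(k0 < n | k0 != k) bval v i (bags s k0) <=
               \sum_(k0 < n | k0 != k) phi b (bval v i (bagB k0)).
    by apply: ler_sum => k0 _; apply: hb.
  have hbge := phi_ge_b b (bval v i (bagB k)).
  have hbv : b = 3/4 + delta + t by [].
  lra.
case: (boolP [exists k, bag_free s k]) => [/existsP [k hbf]|hnf].
  by exists (St (bags s) (owner s) true (Some k)); apply: step_pick.
exfalso.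
pose o := fun k => odflt i (owner s k).
have hsome : forall k, owner s k = Some (o k).
  move=> k; rewrite /o; case e: (owner s k) => [j|] //.
  move/negP: hnf; case; apply/existsP; exists k; by rewrite /bag_free e.
have oinj : injective o.
  move=> k1 k2 e; apply: (I4 k1 k2 (o k1)); by rewrite hsome // e.
have [g _ hg] := inj_card_bij oinj (leqnn _).
move/forallP: hfree => /(_ (g i)); by rewrite hsome hg eqxx.
Qed.
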